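(* Let $H\sim\mathcal{N}(0,\Sigma)$ be a random $M\times N$ matrix, and let $Q^{(1)},Q^{(2)}$ be two capacity-achieving covariance matrices (both maximizers of $C$ over $\{Q\ge0,\ \mathrm{tr}(Q)\le p\}$) with $\mathrm{tr}(Q^{(1)})=p=\mathrm{tr}(Q^{(2)})$. Then $HQ^{(1)}H^H=HQ^{(2)}H^H$ almost surely with respect to the law of $H$.
   Context: Fix integers $M,N\ge1$, noise variance $\sigma_n^2>0$ and power $p>0$. We identify $\mathbb{M}(M,\mathbb{C})\otimes\mathbb{M}(N,\mathbb{C})$ with $\mathbb{M}(MN,\mathbb{C})$ via $(A\otimes B)_{(i,j),(l,m)}=A_{il}B_{jm}$. $H\sim\mathcal{N}(0,\Sigma)$ means: $H$ is a random $M\times N$ complex matrix whose entries are jointly zero-mean circularly symmetric complex Gaussian, with covariance $\Sigma_{(i,j),(l,m)}=\mathcal{E}(H_{ij}\overline{H_{lm}})$. For positive semidefinite $Q\in\mathbb{M}(N,\mathbb{C})$, $C(Q):=\mathcal{E}\big(\log\det(\mathbf{1}_M+\sigma_n^{-2}HQH^H)\big)$. *)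

(* Defs.v *)
From HB Require Import structures.
From mathcomp Require Import all_boot all_order all_algebra.
From mathcomp Require Import complex.
From mathcomp Require Import all_classical all_reals all_analysis.
Set Implicit Arguments. Unset Strict Implicit. Unset Printing Implicit Defensive.
Import Order.TTheory GRing.Theory Num.Theory.
Local Open Scope classical_set_scope.
Local Open Scope ring_scope.
Local Open Scope complex_scope.

Definition adjmx {C : numClosedFieldType} m n (A : 'M[C]_(m, n)) : 'M[C]_(n, m) :=
  map_mx Num.conj A^T.

Definition psdmx {C : numClosedFieldType} n (Q : 'M[C]_n) : Prop :=
  Q = adjmx Q /\ forall v : 'rV[C]_n, 0 <= (v *m Q *m adjmx v) 0 0.

Section Gaussian.
Context {R : realType} {d : measure_display} {T : measurableType d}.
Variable P : probability T R.

(* a real random variable Y is a centered (possibly degenerate) Gaussian: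
   either Y = 0 a.s. (variance 0), or its law is N(0, s^2) with s != 0 *)
Definition centered_gaussian (Y : T -> R) : Prop :=
  measurable_fun setT Y /\
  exists s : R,
    if s == 0 then {ae P, forall w, Y w = 0}
    else forall A : set R, measurable A ->
           P (Y @^-1` A) = normal_prob 0 s A.

Definition cexpect_is (X : T -> R[i]) (z : R[i]) : Prop :=
  [/\ P.-integrable setT (EFin \o (fun w => complex.Re (X w))),
      P.-integrable setT (EFin \o (fun w => complex.Im (X w))),
      ('E_P[fun w => complex.Re (X w)] = (complex.Re z)%:E)%E &
      ('E_P[fun w => complex.Im (X w)] = (complex.Im z)%:E)%E].

(* H ~ N(0, Sigma): entries jointly Gaussian (every real linear combination
   of the real and imaginary parts is a centered Gaussian), circularly
   symmetric (zero pseudo-covariance E[H_ij H_lm] = 0) and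
   E[H_ij conj(H_lm)] = Sigma_{(i,j),(l,m)}, with (i,j) indexed by
   mxvec_index i j (row-major, as in the Kronecker identification). *)
Definition cgaussian_mx M N (H : T -> 'M[R[i]]_(M, N))
    (Sigma : 'M[R[i]]_(M * N)) : Prop :=
  [/\ forall i j, measurable_fun setT (fun w => complex.Re (H w i j)),
      forall i j, measurable_fun setT (fun w => complex.Im (H w i j)),
      forall a b : 'M[R]_(M, N),
        centered_gaussian (fun w => \sum_i \sum_j
          (a i j * complex.Re (H w i j) + b i j * complex.Im (H w i j))),
      forall i j l m, cexpect_is (fun w => H w i j * H w l m) 0 &
      forall i j l m, cexpect_is (fun w => H w i j * Num.conj (H w l m))
                                 (Sigma (mxvec_index i j) (mxvec_index l m))].

(* ergodic capacity C(Q) = E[ log det (1_M + sigma2^-1 H Q H^H) ]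
   (the determinant is real >= 1; we take the log of its real part) *)
Definition capacity M N (H : T -> 'M[R[i]]_(M, N)) (sigma2 : R)
    (Q : 'M[R[i]]_N) : \bar R :=
  'E_P[fun w => ln (complex.Re
     (\det (1%:M + (sigma2^-1)%:C *: (H w *m Q *m adjmx (H w)))))].

Definition capacity_achieving M N (H : T -> 'M[R[i]]_(M, N)) (sigma2 p : R)
    (Q : 'M[R[i]]_N) : Prop :=
  [/\ psdmx Q, \tr Q <= p%:C &
      forall Q' : 'M[R[i]]_N, psdmx Q' -> \tr Q' <= p%:C ->
        (capacity H sigma2 Q' <= capacity H sigma2 Q)%E].

End Gaussian.

(* Main.v *)
Require Import Defs.
From HB Require Import structures.
From mathcomp Require Import all_boot all_order all_algebra.
From mathcomp Require Import complex.
From mathcomp Require Import all_classical all_reals all_analysis.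
From mathcomp Require Import ring lra measurable_realfun.
Import Order.TTheory GRing.Theory Num.Theory.
Local Open Scope classical_set_scope.
Local Open Scope ring_scope.
Local Open Scope complex_scope.
Local Open Scope sesquilinear_scope.
Import Num.Def.

Lemma unitary_tK (C : numClosedFieldType) n (U : 'M[C]_n) :
  U \is unitarymx -> U^t* *m U = 1%:M.
Proof. by move=> Uu; rewrite -invmx_unitary // mulVmx // unitarymx_unit. Qed.

Lemma unitary_Kt (C : numClosedFieldType) n (U : 'M[C]_n) :
  U \is unitarymx -> U *m U^t* = 1%:M.
Proof. by move=> /unitarymxP. Qed.

Lemma adjmxM (C : numClosedFieldType) m n p (A : 'M[C]_(m, n)) (B : 'M[C]_(n, p)) :
  (A *m B)^t* = B^t* *m A^t*.
Proof. by rewrite trmx_mul map_mxM. Qed.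

Lemma psd_decomp (C : numClosedFieldType) n (A : 'M[C]_n) : psdmx A ->
  exists2 U : 'M[C]_n, U \is unitarymx &
  exists2 d : 'rV[C]_n, (forall i, 0 <= d 0 i) & A = U^t* *m diag_mx d *m U.
Proof.
move=> [Ah Apos].
have Aherm : A \is hermsymmx by apply/is_hermitianmxP; rewrite expr0 scale1r.
have /orthomx_spectralP Aeq := hermitian_normalmx Aherm.
set U := spectralmx A in Aeq; set d := spectral_diag A in Aeq.
have Uu : U \is unitarymx by apply: spectral_unitarymx.
rewrite invmx_unitary // in Aeq.
exists U => //; exists d => // i.
have := Apos (delta_mx 0 i *m U).
rewrite /adjmx Aeq adjmxM /=.
have -> : (delta_mx 0 i : 'rV_n) *m U *m (U^t* *m diag_mx d *m U) *m (U^t* *m (delta_mx 0 i : 'rV_n)^t*)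
  = (delta_mx 0 i : 'rV_n) *m diag_mx d *m (delta_mx 0 i : 'rV_n)^t*.
  by rewrite !mulmxA !mulmxtVK.
rewrite mul_mx_diag !mxE (bigD1 i) //= big1 ?addr0.
  by rewrite !mxE !eqxx /= mul1r rmorph1 mulr1.
by move=> j /negbTE ji; rewrite !mxE ji /= mul0r mul0r.
Qed.

Lemma adjmxK (C : numClosedFieldType) m n (A : 'M[C]_(m, n)) : adjmx (adjmx A) = A.
Proof. exact: trmxCK. Qed.

Lemma vvH_ge0 (C : numClosedFieldType) n (v : 'rV[C]_n) : 0 <= (v *m v^t*) 0 0.
Proof.
rewrite mxE; apply: sumr_ge0 => j _; rewrite !mxE; exact: mul_conjC_ge0.
Qed.

Lemma psd1 (C : numClosedFieldType) n : psdmx (1%:M : 'M[C]_n).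
Proof.
split; first by rewrite /adjmx trmx1 map_mx1.
by move=> v; rewrite mulmx1; apply: vvH_ge0.
Qed.

Lemma psdD (C : numClosedFieldType) n (A B : 'M[C]_n) :
  psdmx A -> psdmx B -> psdmx (A + B).
Proof.
move=> [Ah Ap] [Bh Bp]; split.
  by rewrite /adjmx linearD /= map_mxD -!/(adjmx _) -Ah -Bh.
by move=> v; rewrite mulmxDr mulmxDl mxE addr_ge0.
Qed.

Lemma psdZ (C : numClosedFieldType) n (a : C) (A : 'M[C]_n) :
  0 <= a -> psdmx A -> psdmx (a *: A).
Proof.
move=> a0 [Ah Ap]; split.
  rewrite /adjmx linearZ /= map_mxZ -/(adjmx _) -Ah.
  by rewrite /= conj_Creal // ger0_real.
by move=> v; rewrite -scalemxAr -scalemxAl mxE mulr_ge0.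
Qed.

Lemma psd_conj (C : numClosedFieldType) m n (X : 'M[C]_(m, n)) (Q : 'M[C]_n) :
  psdmx Q -> psdmx (X *m Q *m adjmx X).
Proof.
move=> [Qh Qp]; split.
  by rewrite /adjmx !adjmxM -!/(adjmx _) adjmxK -Qh mulmxA.
move=> v; have := Qp (v *m X).
by rewrite /adjmx adjmxM !mulmxA.
Qed.

Lemma det_conjU (C : numClosedFieldType) n (U X : 'M[C]_n) :
  U \is unitarymx -> \det (U^t* *m X *m U) = \det X.
Proof.
by move=> Uu; rewrite !det_mulmx mulrAC -det_mulmx unitary_tK // det1 mul1r.
Qed.

Lemma diag_1Z (C : numClosedFieldType) n (a : C) (D : 'rV[C]_n) :
  diag_mx (\row_i (1 + a * D 0 i)) = 1%:M + a *: diag_mx D.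
Proof.
apply/matrixP => i j; rewrite !mxE; case: eqP => [->|_]; first by rewrite mulr1n.
by rewrite mulr0n add0r mulr0.
Qed.

Lemma conjU_1Z (C : numClosedFieldType) n (a : C) (U : 'M[C]_n) (D : 'rV[C]_n) :
  U \is unitarymx ->
  1%:M + a *: (U^t* *m diag_mx D *m U) = U^t* *m diag_mx (\row_i (1 + a * D 0 i)) *m U.
Proof.
move=> Uu; rewrite diag_1Z mulmxDr mulmxDl mulmx1 unitary_tK //.
by rewrite -scalemxAr -scalemxAl.
Qed.

Lemma ge0_Cre {R : realType} {x : R[i]} : 0 <= x -> x = (complex.Re x)%:C /\ 0 <= complex.Re x.
Proof.
rewrite lecE => /andP [/eqP I0 R0]; split => //.
by case: x I0 {R0} => a b /= ->.
Qed.

Lemma psd_decompR (R : realType) n (A : 'M[R[i]]_n) : psdmx A ->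
  exists2 U : 'M[R[i]]_n, U \is unitarymx &
  exists2 d : 'I_n -> R, (forall i, 0 <= d i) &
     A = U^t* *m diag_mx (\row_i (d i)%:C) *m U.
Proof.
move=> /psd_decomp [U Uu [d d0 ->]]; exists U => //.
exists (fun i => complex.Re (d 0 i)); first by move=> i; case: (ge0_Cre (d0 i)).
suff -> : \row_i (complex.Re (d 0 i))%:C = d by [].
apply/rowP => i; rewrite mxE.
by case: (ge0_Cre (d0 i)) => <-.
Qed.

Lemma psd_det_tr (R : realType) n (A : 'M[R[i]]_n) : psdmx A ->
  exists2 d : 'I_n -> R, (forall i, 0 <= d i) &
    (forall c : R, \det (1%:M + c%:C *: A) = (\prod_i (1 + c * d i))%:C) /\
    \tr A = (\sum_i d i)%:C.
Proof.
move=> /psd_decompR [U Uu [d d0 Ae]]; exists d => //; split.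
  move=> c; rewrite Ae conjU_1Z // det_conjU // det_diag rmorph_prod.
  by apply: eq_bigr => i _; rewrite mxE mxE rmorphD rmorphM rmorph1.
rewrite Ae mxtrace_mulC mulmxA unitary_Kt // mul1mx mxtrace_diag rmorph_sum.
by apply: eq_bigr => i _; rewrite mxE.
Qed.

Lemma det_SXS (C : numClosedFieldType) n (S X : 'M[C]_n) :
  \det (S *m X *m S^t*) = \det S * (\det S)^* * \det X.
Proof.
by rewrite !det_mulmx det_map_mx det_tr mulrAC.
Qed.

Lemma SXS_inj {C : numClosedFieldType} {n} {S X Y : 'M[C]_n} :
  \det S != 0 -> S *m X *m S^t* = S *m Y *m S^t* -> X = Y.
Proof.
move=> dS eq.
have Su : S \in unitmx by rewrite unitmxE unitfE.
have SHu : S^t* \in unitmx by rewrite unitmxE unitfE det_map_mx det_tr conjC_eq0.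
have := congr1 (fun Z => invmx S *m Z *m invmx (S^t*)) eq => /=.
by rewrite !mulmxA !mulVmx // !mul1mx !(mulmxK SHu).
Qed.

Lemma diag_realC (R : realType) n (r : 'I_n -> R) :
  (diag_mx (\row_i (r i)%:C : 'rV[R[i]]_n))^t* = diag_mx (\row_i (r i)%:C).
Proof.
rewrite tr_diag_mx map_diag_mx; congr diag_mx; apply/rowP => i.
rewrite !mxE /=; exact: conjc_real.
Qed.
Arguments psd_decompR {R n A}.
Arguments psd_decomp {C n A}.
Arguments psdD {C n A B}.
Arguments psdZ {C n a A}.
Arguments psd_conj {C m n} X {Q}.
Arguments psd_det_tr {R n A}.

Lemma key_mx (R : realType) n (A1 A2 : 'M[R[i]]_n) (c : R) :
  psdmx A1 -> psdmx A2 -> 0 < c ->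
  exists s : R, exists2 l : 'I_n -> R, 0 < s /\ (forall i, 0 <= l i) &
   [/\ \det (1%:M + c%:C *: A1) = s%:C,
       \det (1%:M + c%:C *: A2) = (s * \prod_i l i)%:C,
       \det (1%:M + c%:C *: (2^-1 *: (A1 + A2))) = (s * \prod_i ((1 + l i) / 2))%:C &
       ((forall i, l i = 1) -> A1 = A2)].
Proof.
move=> pA1 pA2 c0.
have [U Uu [d d0 A1e]] := psd_decompR pA1.
pose e i := 1 + c * d i.
have e0 i : 0 < e i by rewrite /e ltr_pwDl // mulr_ge0 // ltW.
have B1e : 1%:M + c%:C *: A1 = U^t* *m diag_mx (\row_i (e i)%:C) *m U.
  rewrite A1e (conjU_1Z _ _ c%:C U _ Uu).
  suff -> : \row_i (1 + c%:C * (\row_i (d i)%:C : 'rV[R[i]]_n) 0 i) = \row_i (e i)%:C by [].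
  by apply/rowP => i; rewrite !mxE rmorphD rmorphM rmorph1.
pose r i := (Num.sqrt (e i))^-1.
pose Dr := diag_mx (\row_i (r i)%:C : 'rV[R[i]]_n).
pose S := Dr *m U.
have SH : S^t* = U^t* *m Dr by rewrite adjmxM diag_realC.
have SB1 : S *m (1%:M + c%:C *: A1) *m S^t* = 1%:M.
  rewrite B1e SH /S /Dr !mulmxA !mulmxtVK // !mulmx_diag -diag_const_mx.
  congr diag_mx; apply/rowP => i; rewrite !mxE -!rmorphM; congr (_%:C).
  rewrite /r mulrAC -expr2 exprVn sqr_sqrtr ?mulVf //; last exact: ltW.
  by rewrite gt_eqF.
have pB2 : psdmx (1%:M + c%:C *: A2).
  by apply: psdD (psd1 _ _) (psdZ _ pA2); rewrite ler0c ltW.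
have pK := psd_conj S pB2.
have [V Vu [l l0 Ke]] := psd_decompR pK.
have dB1 : \det (1%:M + c%:C *: A1) = (\prod_i e i)%:C.
  rewrite B1e (det_conjU _ _ U _ Uu) det_diag (rmorph_prod (real_complex R)).
  by apply: eq_bigr => i _; rewrite mxE.
have s'e : \det S * (\det S)^* * (\prod_i e i)%:C = 1.
  by rewrite -dB1 -det_SXS SB1 det1.
have pe : 0 < \prod_i e i by apply: prodr_gt0 => i _.
have pe2 : (\prod_i e i)%:C != 0 :> R[i] by rewrite (inj_eq (@complexI _)) gt_eqF.
have s'E : \det S * (\det S)^* = ((\prod_i e i)%:C)^-1.
  by rewrite -[LHS](mulfK pe2) s'e mul1r.
have dS0 : \det S != 0.
  by move: s'e; case: eqP => // ->; rewrite !mul0r => /esym/eqP; rewrite oner_eq0.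
have eK : \det (S *m (1%:M + c%:C *: A2) *m S^t*) = (\prod_i l i)%:C.
  rewrite -/(adjmx S) Ke det_conjU // det_diag rmorph_prod.
  by apply: eq_bigr => i _; rewrite mxE.
rewrite det_SXS s'E in eK.
exists (\prod_i e i), l => //; split => //.
- by rewrite rmorphM /= -eK mulrA mulfV // mul1r.
- have Bm : 1%:M + c%:C *: (2^-1 *: (A1 + A2)) =
      2^-1 *: ((1%:M + c%:C *: A1) + (1%:M + c%:C *: A2)) :> 'M[R[i]]_n.
    apply/matrixP => i j; rewrite !mxE.
    have h2 : (2 : R[i]) != 0 by rewrite pnatr_eq0.
    by field.
  have SB : S *m (1%:M + c%:C *: (2^-1 *: (A1 + A2))) *m S^t*
      = 2^-1 *: (1%:M + 1 *: (S *m (1%:M + c%:C *: A2) *m S^t*)).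
    rewrite Bm -scalemxAr -scalemxAl scale1r; congr (_ *: _).
    by rewrite [S *m (_ + (_ + _))]mulmxDr mulmxDl SB1.
  have := congr1 determinant SB.
  rewrite det_SXS s'E detZ -/(adjmx S) Ke conjU_1Z // det_conjU // det_diag => eB.
  have hP : (\prod_i ((1 + l i) / 2))%:C =
      (2^-1)^+n * \prod_i (\row_i (1 + 1 * (\row_j (l j)%:C : 'rV[R[i]]_n) 0 i) : 'rV[R[i]]_n) 0 i.
    rewrite rmorph_prod (eq_bigr (fun i => (1 + 1 * (l i)%:C) * 2^-1)); last first.
      by move=> i _; rewrite mul1r rmorphM rmorphD rmorph1 fmorphV rmorph_nat.
    rewrite big_split /= prodr_const card_ord mulrC; congr (_ * _).
    by apply: eq_bigr => i _; rewrite !mxE.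
  by rewrite rmorphM /= hP -eB mulrA mulfV // mul1r.
- move=> l1; have K1 : S *m (1%:M + c%:C *: A2) *m S^t* = 1%:M.
    rewrite -/(adjmx S) Ke (_ : diag_mx _ = 1%:M) ?mulmx1 ?unitary_tK //.
    rewrite -diag_const_mx; congr diag_mx; apply/rowP => i.
    by rewrite !mxE l1.
  have := SXS_inj dS0 (etrans K1 (esym SB1)) => /addrI /scalerI -> //.
  by rewrite (inj_eq (@complexI _)) gt_eqF.
Qed.

Lemma prod_eq_each (R : realType) n (a b : 'I_n -> R) :
  (forall i, 0 <= b i <= a i) -> 0 < \prod_i b i -> \prod_i a i = \prod_i b i ->
  forall i, a i = b i.
Proof.
move=> hab pb eq j; apply/eqP; rewrite eq_le; have /andP [b0 ->] := hab j.
rewrite andbT leNgt; apply/negP => ltba.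
move: eq; rewrite (bigD1 j) //= [X in _ = X](bigD1 j) //=.
set ra := \prod_(i | i != j) a i; set rb := \prod_(i | i != j) b i.
have rb0 : 0 < rb.
  have : 0 <= rb by apply: prodr_ge0 => i _; have /andP[] := hab i.
  rewrite le_eqVlt => /orP [/eqP rb0|//].
  by move: pb; rewrite (bigD1 j) //= -/rb -rb0 mulr0 ltxx.
have rab : rb <= ra by apply: ler_prod => i _; exact: hab.
move=> eq; have : b j * rb < a j * ra.
  apply: (lt_le_trans (y := a j * rb)); first by rewrite ltr_pM2r.
  by rewrite ler_wpM2l // (le_trans b0) // ltW.
by rewrite eq ltxx.
Qed.

Lemma lnM' (R : realType) (x y : R) : 0 < x -> 0 < y -> ln (x * y) = ln x + ln y.
Proof. by move=> x0 y0; rewrite lnM. Qed.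

Lemma ln_inj' (R : realType) (x y : R) : 0 < x -> 0 < y -> ln x = ln y -> x = y.
Proof. by move=> x0 y0; apply: ln_inj. Qed.

Lemma ler_ln' (R : realType) (x y : R) : 0 < x -> 0 < y -> (ln x <= ln y) = (x <= y).
Proof. by move=> x0 y0; rewrite ler_ln. Qed.

Lemma real_key (R : realType) n (s : R) (l : 'I_n -> R) :
  0 < s -> (forall i, 0 <= l i) -> 0 < s * \prod_i l i ->
  ln s + ln (s * \prod_i l i) <= 2 * ln (s * \prod_i ((1 + l i) / 2)) /\
  (ln s + ln (s * \prod_i l i) = 2 * ln (s * \prod_i ((1 + l i) / 2)) ->
     forall i, l i = 1).
Proof.
move=> s0 l0 sl0.
have La0 : 0 < \prod_i l i by rewrite -(pmulr_rgt0 _ s0).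
have hp i : 0 < (1 + l i) / 2 by apply: divr_gt0 => //; rewrite ltr_pwDl // l0.
have Pi0 : 0 < \prod_i ((1 + l i) / 2) by apply: prodr_gt0 => i _.
have sPi0 : 0 < s * \prod_i ((1 + l i) / 2) by rewrite mulr_gt0.
have e1 : ln s + ln (s * \prod_i l i) = ln (s * (s * \prod_i l i)).
  by rewrite [RHS]lnM'.
have e2 : 2 * ln (s * \prod_i ((1 + l i) / 2)) =
    ln ((s * \prod_i ((1 + l i) / 2)) * (s * \prod_i ((1 + l i) / 2))).
  by rewrite [RHS]lnM' // mulr_natl mulr2n.
have hPi : (s * \prod_i ((1 + l i) / 2)) * (s * \prod_i ((1 + l i) / 2))
    = s * (s * \prod_i (((1 + l i) / 2) * ((1 + l i) / 2))).
  rewrite [in RHS]big_split /=; ring.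
have hab i : 0 <= l i <= ((1 + l i) / 2) * ((1 + l i) / 2).
  rewrite l0 /= -subr_ge0 (_ : _ - _ = ((1 - l i) / 2) ^+ 2) ?sqr_ge0 //; by field.
rewrite e1 e2 hPi; split.
  rewrite ler_ln'; last 2 first.
  - by rewrite mulr_gt0.
  - apply: mulr_gt0 => //; apply: mulr_gt0 => //.
    by apply: prodr_gt0 => i _; apply: mulr_gt0.
  by rewrite ler_pM2l // ler_pM2l // ler_prod.
move=> /ln_inj' eq i.
have pos1 : 0 < s * (s * \prod_i l i) by rewrite !mulr_gt0.
have pos2 : 0 < s * (s * \prod_i ((1 + l i) / 2 * ((1 + l i) / 2))).
  apply: mulr_gt0 => //; apply: mulr_gt0 => //.
  by apply: prodr_gt0 => j _; apply: mulr_gt0.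
have := eq pos1 pos2 => /(mulfI (lt0r_neq0 s0)) /(mulfI (lt0r_neq0 s0)) E.
have := @prod_eq_each R n (fun i => ((1 + l i) / 2) * ((1 + l i) / 2)) l hab La0 (esym E) i.
move=> h; have : ((1 - l i) / 2) ^+ 2 = 0 by rewrite -[X in _ = X](subrr (l i)) -[X in _ = X - _]h; field.
move/eqP; rewrite sqrf_eq0 mulf_eq0 invr_eq0 pnatr_eq0 orbF subr_eq0.
by move=> /eqP <-.
Qed.

Lemma psd_bound (R : realType) n (A : 'M[R[i]]_n) (c : R) : psdmx A -> 0 < c ->
  1 <= complex.Re (\det (1%:M + c%:C *: A)) /\
  ln (complex.Re (\det (1%:M + c%:C *: A))) <= c * complex.Re (\tr A).
Proof.
move=> pA c0; have [d d0 [hd ht]] := psd_det_tr pA.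
rewrite hd ht /=.
have h1 i : 1 <= 1 + c * d i by rewrite lerDl mulr_ge0 // ltW.
have P1 : 1 <= \prod_i (1 + c * d i).
  by apply: (big_ind (fun x => 1 <= x)) => // x y; apply: mulr_ege1.
split => //.
rewrite -ler_expR lnK ?posrE ?(lt_le_trans ltr01) // mulr_sumr expR_sum.
apply: ler_prod => i _; rewrite (le_trans ler01 (h1 i)) /=.
exact: expR_ge1Dx.
Qed.

Definition lndet {R : realType} {n} (c : R) (A : 'M[R[i]]_n) : R :=
  ln (complex.Re (\det (1%:M + c%:C *: A))).

Lemma gap (R : realType) n (A1 A2 : 'M[R[i]]_n) (c : R) :
  psdmx A1 -> psdmx A2 -> 0 < c ->
  lndet c A1 + lndet c A2 <= 2 * lndet c (2^-1 *: (A1 + A2)) /\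
  (lndet c A1 + lndet c A2 = 2 * lndet c (2^-1 *: (A1 + A2)) -> A1 = A2).
Proof.
move=> p1 p2 c0.
have [s [l [s0 l0] [e1 e2 e3 eq]]] := key_mx _ _ _ _ _ p1 p2 c0.
have [b2 _] := psd_bound _ _ _ _ p2 c0.
rewrite e2 /= in b2.
have sl0 : 0 < s * \prod_i l i by apply: lt_le_trans b2.
have [h1 h2] := real_key _ _ _ _ s0 l0 sl0.
rewrite /lndet e1 e2 e3 /=; split => // h; apply: eq; exact: h2.
Qed.

Lemma ReD (R : realType) (x y : R[i]) : complex.Re (x + y) = complex.Re x + complex.Re y.
Proof. by case: x; case: y. Qed.
Lemma ImD (R : realType) (x y : R[i]) : complex.Im (x + y) = complex.Im x + complex.Im y.
Proof. by case: x; case: y. Qed.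
Lemma ReM (R : realType) (x y : R[i]) :
  complex.Re (x * y) = complex.Re x * complex.Re y - complex.Im x * complex.Im y.
Proof. by case: x; case: y. Qed.
Lemma ImM (R : realType) (x y : R[i]) :
  complex.Im (x * y) = complex.Re x * complex.Im y + complex.Im x * complex.Re y.
Proof. by case: x => a b; case: y => c e /=; rewrite addrC. Qed.
Lemma Re_conj (R : realType) (x : R[i]) : complex.Re (Num.conj x) = complex.Re x.
Proof. by case: x. Qed.
Lemma Im_conj (R : realType) (x : R[i]) : complex.Im (Num.conj x) = - complex.Im x.
Proof. by case: x. Qed.
Lemma Re0 (R : realType) : complex.Re (0 : R[i]) = 0. Proof. by []. Qed.
Lemma Im0 (R : realType) : complex.Im (0 : R[i]) = 0. Proof. by []. Qed.
Lemma Re1 (R : realType) : complex.Re (1 : R[i]) = 1. Proof. by []. Qed.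
Lemma Im1 (R : realType) : complex.Im (1 : R[i]) = 0. Proof. by []. Qed.

Definition cmeas {d} {T : measurableType d} {R : realType} (F : T -> R[i]) :=
  measurable_fun setT (fun w => complex.Re (F w)) /\
  measurable_fun setT (fun w => complex.Im (F w)).

Lemma cmeas_cst {d} {T : measurableType d} {R : realType} (z : R[i]) :
  cmeas (fun _ : T => z).
Proof. by split; apply: measurable_cst. Qed.

Lemma cmeasD {d} {T : measurableType d} {R : realType} (F G : T -> R[i]) :
  cmeas F -> cmeas G -> cmeas (fun w => F w + G w).
Proof.
move=> [F1 F2] [G1 G2]; split.
  by under eq_fun do rewrite ReD; apply: measurable_funD.
by under eq_fun do rewrite ImD; apply: measurable_funD.
Qed.

Lemma cmeasM {d} {T : measurableType d} {R : realType} (F G : T -> R[i]) :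
  cmeas F -> cmeas G -> cmeas (fun w => F w * G w).
Proof.
move=> [F1 F2] [G1 G2]; split.
  by under eq_fun do rewrite ReM; apply: measurable_funB; apply: measurable_funM.
by under eq_fun do rewrite ImM; apply: measurable_funD; apply: measurable_funM.
Qed.

Lemma cmeas_conj {d} {T : measurableType d} {R : realType} (F : T -> R[i]) :
  cmeas F -> cmeas (fun w => Num.conj (F w)).
Proof.
move=> [F1 F2]; split.
  by under eq_fun do rewrite Re_conj.
by under eq_fun do rewrite Im_conj; apply: measurableT_comp.
Qed.

Lemma cmeas_sum {d} {T : measurableType d} {R : realType} (I : Type) (s : seq I)
  (P : pred I) (F : I -> T -> R[i]) :
  (forall i, cmeas (F i)) -> cmeas (fun w => \sum_(i <- s | P i) F i w).
Proof.
move=> hF; elim: s => [|a s IH].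
  by under eq_fun do rewrite big_nil; apply: cmeas_cst.
under eq_fun do rewrite big_cons.
case: (P a) => //; exact: cmeasD.
Qed.

Lemma cmeas_prod {d} {T : measurableType d} {R : realType} (I : Type) (s : seq I)
  (P : pred I) (F : I -> T -> R[i]) :
  (forall i, cmeas (F i)) -> cmeas (fun w => \prod_(i <- s | P i) F i w).
Proof.
move=> hF; elim: s => [|a s IH].
  by under eq_fun do rewrite big_nil; apply: cmeas_cst.
under eq_fun do rewrite big_cons.
case: (P a) => //; exact: cmeasM.
Qed.

Definition cmx {d} {T : measurableType d} {R : realType} {m n} (A : T -> 'M[R[i]]_(m, n)) :=
  forall i j, cmeas (fun w => A w i j).

Lemma cmxM {d} {T : measurableType d} {R : realType} {m n p}
  (A : T -> 'M[R[i]]_(m, n)) (B : T -> 'M[R[i]]_(n, p)) :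
  cmx A -> cmx B -> cmx (fun w => A w *m B w).
Proof.
move=> hA hB i j; under eq_fun do rewrite mxE.
by apply: cmeas_sum => k; apply: cmeasM.
Qed.

Lemma cmxD {d} {T : measurableType d} {R : realType} {m n}
  (A B : T -> 'M[R[i]]_(m, n)) :
  cmx A -> cmx B -> cmx (fun w => A w + B w).
Proof. by move=> hA hB i j; under eq_fun do rewrite mxE; apply: cmeasD. Qed.

Lemma cmx_cst {d} {T : measurableType d} {R : realType} {m n} (A : 'M[R[i]]_(m, n)) :
  cmx (fun _ : T => A).
Proof. by move=> i j; apply: cmeas_cst. Qed.

Lemma cmxZ {d} {T : measurableType d} {R : realType} {m n} (a : R[i])
  (A : T -> 'M[R[i]]_(m, n)) : cmx A -> cmx (fun w => a *: A w).
Proof.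
by move=> hA i j; under eq_fun do rewrite mxE; apply: cmeasM => //; apply: cmeas_cst.
Qed.

Lemma cmx_adj {d} {T : measurableType d} {R : realType} {m n}
  (A : T -> 'M[R[i]]_(m, n)) : cmx A -> cmx (fun w => adjmx (A w)).
Proof. by move=> hA i j; under eq_fun do rewrite !mxE; apply: cmeas_conj. Qed.

Lemma cmeas_det {d} {T : measurableType d} {R : realType} {n}
  (A : T -> 'M[R[i]]_n) : cmx A -> cmeas (fun w => \det (A w)).
Proof.
move=> hA; rewrite /determinant; apply: cmeas_sum => s.
apply: cmeasM; first exact: cmeas_cst.
by apply: cmeas_prod => i; apply: hA.
Qed.

Lemma meas_lndet {d} {T : measurableType d} {R : realType} {n} (c : R)
  (A : T -> 'M[R[i]]_n) : cmx A -> measurable_fun setT (fun w => lndet c (A w)).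
Proof.
move=> hA; rewrite /lndet; apply: measurableT_comp; first exact: measurable_ln.
have [] := @cmeas_det _ _ _ _ (fun w => 1%:M + c%:C *: A w) _ => //.
by apply: cmxD; [apply: cmx_cst|apply: cmxZ].
Qed.

Definition rint {d} {T : measurableType d} {R : realType} (P : probability T R) (f : T -> R) :=
  P.-integrable setT (EFin \o f).

Lemma rintD {d} {T : measurableType d} {R : realType} (P : probability T R) (f g : T -> R) :
  rint P f -> rint P g -> rint P (fun w => f w + g w).
Proof.
move=> hf hg; apply: eq_integrable (integrableD _ hf hg) => //.
Qed.

Lemma rintZ {d} {T : measurableType d} {R : realType} (P : probability T R) (k : R) (f : T -> R) :
  rint P f -> rint P (fun w => k * f w).
Proof.
move=> hf; apply: eq_integrable (integrableZl _ k hf) => //.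
Qed.

Lemma rintB {d} {T : measurableType d} {R : realType} (P : probability T R) (f g : T -> R) :
  rint P f -> rint P g -> rint P (fun w => f w - g w).
Proof.
move=> hf hg; apply: eq_integrable (integrableB _ hf hg) => //.
Qed.

Lemma rint0 {d} {T : measurableType d} {R : realType} (P : probability T R) :
  rint P (fun _ => 0).
Proof. exact: integrable0. Qed.

Definition cint {d} {T : measurableType d} {R : realType} (P : probability T R) (F : T -> R[i]) :=
  rint P (fun w => complex.Re (F w)) /\ rint P (fun w => complex.Im (F w)).

Lemma cintD {d} {T : measurableType d} {R : realType} (P : probability T R) (F G : T -> R[i]) :
  cint P F -> cint P G -> cint P (fun w => F w + G w).
Proof.
move=> [F1 F2] [G1 G2]; split.
  by under eq_fun do rewrite ReD; apply: rintD.
by under eq_fun do rewrite ImD; apply: rintD.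
Qed.

Lemma cintZ {d} {T : measurableType d} {R : realType} (P : probability T R) (q : R[i]) (F : T -> R[i]) :
  cint P F -> cint P (fun w => q * F w).
Proof.
move=> [F1 F2]; split.
  by under eq_fun do rewrite ReM; apply: rintB; apply: rintZ.
by under eq_fun do rewrite ImM; apply: rintD; apply: rintZ.
Qed.

Lemma cint_sum {d} {T : measurableType d} {R : realType} (P : probability T R) (I : Type) (s : seq I)
  (F : I -> T -> R[i]) :
  (forall i, cint P (F i)) -> cint P (fun w => \sum_(i <- s) F i w).
Proof.
move=> hF; elim: s => [|a s IH].
  by under eq_fun do rewrite big_nil; split; apply: rint0.
under eq_fun do rewrite big_cons.
exact: cintD.
Qed.
Lemma captest2 (R : realType) (d : measure_display) (T : measurableType d)
  (P : probability T R) (M N : nat) (sigma2 : R) (H : T -> 'M[R[i]]_(M, N)) (Q : 'M[R[i]]_N) :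
  capacity P H sigma2 Q = (\int[P]_w (lndet (sigma2^-1) (H w *m Q *m adjmx (H w)))%:E)%E.
Proof. by rewrite /capacity expectation.unlock. Qed.

Lemma traceHQH (R : realType) M N (Hw : 'M[R[i]]_(M, N)) (Q : 'M[R[i]]_N) :
  \tr (Hw *m Q *m adjmx Hw) =
  \sum_(i < M) \sum_(k < N) \sum_(j < N) Q j k * (Hw i j * Num.conj (Hw i k)).
Proof.
rewrite /mxtrace; apply: eq_bigr => i _; rewrite mxE; apply: eq_bigr => k _.
rewrite !mxE big_distrl /=; apply: eq_bigr => j _.
by rewrite mulrCA mulrA.
Qed.

Theorem lemma2 (R : realType) (d : measure_display) (T : measurableType d)
  (P : probability T R) (M N : nat) (sigma2 p : R)
  (Sigma : 'M[R[i]]_(M * N)) (H : T -> 'M[R[i]]_(M, N))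
  (Q1 Q2 : 'M[R[i]]_N) :
  (0 < M)%N -> (0 < N)%N -> 0 < sigma2 -> 0 < p ->
  cgaussian_mx P H Sigma ->
  capacity_achieving P H sigma2 p Q1 ->
  capacity_achieving P H sigma2 p Q2 ->
  \tr Q1 = p%:C -> \tr Q2 = p%:C ->
  {ae P, forall w, H w *m Q1 *m adjmx (H w) = H w *m Q2 *m adjmx (H w)}.
Proof.
move=> M0 N0 s0 p0 [mRe mIm _ _ hcov] [pQ1 trQ1 opt1] [pQ2 trQ2 opt2] tr1 tr2.
pose c := sigma2^-1.
have c0 : 0 < c by rewrite invr_gt0.
have hH : cmx H by move=> i j; split; [apply: mRe|apply: mIm].
pose X Q w := H w *m Q *m adjmx (H w).
pose f Q w := lndet c (X Q w).
have hX Q : cmx (X Q) by apply: cmxM; [apply: cmxM => //; apply: cmx_cst|apply: cmx_adj].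
have mf Q : measurable_fun setT (f Q) by apply: meas_lndet.
have pX Q w : psdmx Q -> psdmx (X Q w) by move=> pQ; apply: psd_conj.
have f0 Q w : psdmx Q -> 0 <= f Q w.
  by move=> pQ; have [h _] := psd_bound _ _ _ _ (pX Q w pQ) c0; apply: ln_ge0.
have fle Q w : psdmx Q -> f Q w <= c * complex.Re (\tr (X Q w)).
  by move=> pQ; have [_ h] := psd_bound _ _ _ _ (pX Q w pQ) c0.
have rtr Q : rint P (fun w => complex.Re (\tr (X Q w))).
  have : cint P (fun w => \tr (X Q w)); last by case.
  under eq_fun do rewrite /X traceHQH.
  apply: cint_sum => i; apply: cint_sum => k; apply: cint_sum => j.
  apply: cintZ; have [h1 h2 _ _] := hcov i j i k; split => //.
have intf Q : psdmx Q -> rint P (f Q).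
  move=> pQ; have := rintZ P c _ (rtr Q); rewrite /rint => hi.
  apply: (le_integrable measurableT _ _ hi).
    by apply/measurable_EFinP.
  move=> w _ /=; rewrite lee_fin ger0_norm ?f0 //.
  exact: (le_trans (fle Q w pQ) (ler_norm _)).
have [Q eQ] : exists Q : 'M[R[i]]_N, Q = 2^-1 *: (Q1 + Q2) by eexists.
have pQ : psdmx Q by rewrite eQ; apply: psdZ; [rewrite invr_ge0 ler0n|apply: psdD].
have trQe : \tr Q = p%:C.
  rewrite eQ mxtraceZ mxtraceD tr1 tr2.
  have h2 : (2 : R[i]) != 0 by rewrite pnatr_eq0.
  by field.
have trQ : \tr Q <= p%:C by rewrite trQe.
have XQ w : X Q w = 2^-1 *: (X Q1 w + X Q2 w).
  by rewrite /X eQ -scalemxAr -scalemxAl mulmxDr mulmxDl.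
have E1 := opt1 Q pQ trQ; have E2 := opt2 Q pQ trQ.
rewrite !captest2 in E1 E2.
change (is_true (\int[P]_w (f Q w)%:E <= \int[P]_w (f Q1 w)%:E)%E) in E1.
change (is_true (\int[P]_w (f Q w)%:E <= \int[P]_w (f Q2 w)%:E)%E) in E2.
have i0 := intf Q pQ; have i1 := intf Q1 pQ1; have i2 := intf Q2 pQ2.
have fE Q' w : f Q' w = lndet c (X Q' w) by [].
clearbody f.
pose g w := 2 * f Q w - f Q1 w - f Q2 w.
have gE w : g w = 2 * f Q w - f Q1 w - f Q2 w by [].
clearbody g.
have g0 w : 0 <= g w.
  have [h _] := gap _ _ _ _ _ (pX Q1 w pQ1) (pX Q2 w pQ2) c0.
  by rewrite gE !fE XQ -addrA -opprD subr_ge0.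
have i01 : rint P (fun w => 2 * f Q w - f Q1 w) by apply: rintB => //; apply: rintZ.
have ig : rint P g.
  rewrite (_ : g = fun w => 2 * f Q w - f Q1 w - f Q2 w); first by apply: rintB.
  by apply/funext => w; rewrite gE.
have Ig : (\int[P]_w (g w)%:E = 2%:E * \int[P]_w (f Q w)%:E
            - \int[P]_w (f Q1 w)%:E - \int[P]_w (f Q2 w)%:E)%E.
  transitivity (\int[P]_x ((2 * f Q x - f Q1 x)%:E - (f Q2 x)%:E))%E.
    by apply: eq_integral => x _; rewrite gE -EFinB.
  rewrite (integralB measurableT i01 i2).
  transitivity (\int[P]_x (2%:E * (f Q x)%:E - (f Q1 x)%:E)
     - \int[P]_x (f Q2 x)%:E)%E.
    by congr (_ - _)%E; apply: eq_integral => x _; rewrite -EFinM -EFinB.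
  have i0' : P.-integrable setT (fun w => 2%:E * (f Q w)%:E)%E := integrableZl measurableT 2 i0.
  by rewrite (integralB measurableT i0' i1) (integralZl measurableT i0).
have fn0 : (\int[P]_w (f Q w)%:E)%E \is a fin_num := integrable_fin_num measurableT i0.
have fn1 : (\int[P]_w (f Q1 w)%:E)%E \is a fin_num := integrable_fin_num measurableT i1.
have fn2 : (\int[P]_w (f Q2 w)%:E)%E \is a fin_num := integrable_fin_num measurableT i2.
have Ig0 : (\int[P]_w (g w)%:E = 0)%E.
  apply/eqP; rewrite eq_le integral_ge0 ?andbT; last by move=> w _; rewrite lee_fin.
  move: E1 E2.
  rewrite Ig -(fineK fn0) -(fineK fn1) -(fineK fn2).
  rewrite !lee_fin => E1 E2.
  rewrite -addrA -opprD subr_le0 mulr_natl mulr2n.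
  exact: lerD E1 E2.
have mEg : measurable_fun setT (EFin \o g) := measurable_int P ig.
have := ae_eq_integral_abs P measurableT mEg.
move=> [+ _] => /(_ _) h.
have {h} h : ae_eq P setT (EFin \o g) (cst 0).
  apply: h; rewrite -Ig0; apply: eq_integral => x _.
  by rewrite abse_EFin ger0_norm ?g0.
apply: filterS h => w /(_ I) [gw0].
have [_ hg] := gap _ _ _ _ _ (pX Q1 w pQ1) (pX Q2 w pQ2) c0.
apply: hg; move: gw0; rewrite gE !fE XQ -addrA -opprD => /eqP; rewrite subr_eq0 => /eqP ->.
by [].
Qed.
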